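(* Let $n,m\ge1$, let $V'$ and $W'$ be complex Hilbert spaces with $\dim V'=n$ and $\dim W'=m$, let $\varepsilon\in\{0,1\}$, and let $R\in End\big((V'\otimes W')^{\otimes 2}\big)$ be defined by $$R(v\otimes w\otimes v'\otimes w')=(-1)^\varepsilon\, v'\otimes w\otimes v\otimes w'\qquad(v,v'\in V',\ w,w'\in W').$$ Then $R$ is an $R$-matrix, and its Thoma parameters are $\alpha_1=\dots=\alpha_n=\frac1n$ (all other $\alpha_i=0$), $\beta=0$ if $\varepsilon=0$; and $\alpha=0$, $\beta_1=\dots=\beta_n=\frac1n$ (all other $\beta_i=0$) if $\varepsilon=1$.
   Context: For a finite-dimensional Hilbert space $E$ of dimension $D$, an $R$-matrix is $R\in End(E\otimes E)$ with $R^2=1$ and $(R\otimes1)(1\otimes R)(R\otimes1)=(1\otimes R)(R\otimes1)(1\otimes R)$. Its Yang-Baxter representation $\rho_R$ of $\mathfrak{S}_\infty$ sends $\sigma_i=(i\ i{+}1)$ to $1^{\otimes i-1}\otimes R\otimes1\otimes\cdots\in\bigotimes_{k\ge1}End(E)$, and its Yang-Baxter character is $\chi_R=\tau\circ\rho_R$ with $\tau=\bigotimes_{k\ge1}\frac{\mathrm{Tr}}{D}$. Extremal characters of $\mathfrak{S}_\infty$ are in bijection (Thoma) with pairs of nonincreasing nonnegative sequences $(\alpha,\beta)$ with $\sum_i\alpha_i+\beta_i\le1$, via $\chi(c_k)=\sum_i\alpha_i^k+(-1)^{k-1}\beta_i^k$ for $k\ge2$, where $c_k=(1\,2\,\cdots\,k)$;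 the Thoma parameters of $R$ are the pair $(\alpha,\beta)$ corresponding to $\chi_R$. *)

(* Defs.v *)
(* Scalars: algC (algebraic complex numbers); all operators
   involved have integer entries. *)
From mathcomp Require Import all_boot all_order all_algebra all_fingroup algC.
Set Implicit Arguments. Unset Strict Implicit. Unset Printing Implicit Defensive.
Import GRing.Theory Num.Theory.
Local Open Scope ring_scope.

(* Operators on the Hilbert space with orthonormal basis indexed by the
   finite type T: A x y = <x| A |y>. *)
Definition op (T : finType) := T -> T -> algC.
Definition mulop (T : finType) (A B : op T) : op T :=
  fun x y => \sum_(z : T) A x z * B z y.
Definition idop (T : finType) : op T := fun x y => (x == y)%:R.
Definition trop (T : finType) (A : op T) : algC := \sum_(x : T) A x x.

(* Basis of E^{(x) N} : configurations 'I_N -> E (sites numbered from 0). *)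
Definition config (E : finType) (N : nat) := {ffun 'I_N -> E}.

(* generator i : 'I_N' of S_{N'.+1} is the transposition of sites i, i+1 *)
Definition site0 (N' : nat) (i : 'I_N') : 'I_N'.+1 := widen_ord (leqnSn N') i.
Definition site1 (N' : nat) (i : 'I_N') : 'I_N'.+1 := lift ord0 i.

(* 1^{(x) i} (x) R (x) 1 ... acting on E^{(x) N'.+1} *)
Definition local_op (E : finType) (N' : nat) (R : op (E * E)%type) (i : 'I_N')
  : op (config E N'.+1) :=
  fun x y => R (x (site0 i), x (site1 i)) (y (site0 i), y (site1 i)) *
    [forall j, ((j != site0 i) && (j != site1 i)) ==> (x j == y j)]%:R.

Definition is_Rmatrix (E : finType) (R : op (E * E)%type) : Prop :=
  (forall x y, mulop R R x y = idop x y) /\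
  (forall x y : config E 3,
     mulop (mulop (local_op R (@ord0 1)) (local_op R (@ord_max 1)))
           (local_op R (@ord0 1)) x y =
     mulop (mulop (local_op R (@ord_max 1)) (local_op R (@ord0 1)))
           (local_op R (@ord_max 1)) x y).

Definition rho (E : finType) (N' : nat) (R : op (E * E)%type) (w : seq 'I_N')
  : op (config E N'.+1) :=
  foldr (fun i A => mulop (local_op R i) A) (@idop _) w.

Definition word_perm (N' : nat) (w : seq 'I_N') : {perm 'I_N'.+1} :=
  \prod_(i <- w) tperm (site0 i) (site1 i).

(* chi_R = tau o rho_R, tau = (x)_k Tr/D ; on S_{N'.+1} only N'.+1 sites matter *)
Definition YBchar (E : finType) (N' : nat) (R : op (E * E)%type) (w : seq 'I_N')
  : algC :=
  (#|E|%:R ^+ N'.+1)^-1 * trop (rho R w).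

(* Thoma's formula for (finitely supported) parameters alpha, beta:
   chi(c_k) = sum alpha_i^k + (-1)^(k-1) sum beta_i^k for k >= 2,
   extended multiplicatively over the cycles of a permutation. *)
Definition thoma_p (a b : seq algC) (k : nat) : algC :=
  if (k <= 1)%N then 1
  else \sum_(x <- a) x ^+ k + (-1) ^+ k.-1 * \sum_(x <- b) x ^+ k.

Definition thoma_char (a b : seq algC) (N : nat) (s : {perm 'I_N}) : algC :=
  \prod_(C in porbits s) thoma_p a b #|C|.

(* The R-matrix of the statement on E = V' (x) W', V' = C^n, W' = C^m:
   R (v(x)w(x)v'(x)w') = (-1)^eps v'(x)w(x)v(x)w'. *)
Definition Espace (n m : nat) : finType := ('I_n * 'I_m)%type.
Definition Rmat (n m : nat) (eps : bool) : op (Espace n m * Espace n m)%type :=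
  fun x y => (-1) ^+ eps *
    ((x.1.1 == y.2.1) && (x.1.2 == y.1.2) && (x.2.1 == y.1.1) && (x.2.2 == y.2.2))%:R.
Arguments Rmat n m eps : clear implicits.

(* Main.v *)
Require Import Defs.
From mathcomp Require Import all_boot all_order all_algebra all_fingroup algC.
From mathcomp Require Import ring.
Set Implicit Arguments. Unset Strict Implicit. Unset Printing Implicit Defensive.
Import GRing.Theory Num.Theory.
Local Open Scope ring_scope.

Section Aux.
Variables (n m : nat).
Local Notation E := (Espace n m).

Definition cact (N : nat) (s : {perm 'I_N}) (y : config E N) : config E N :=
  [ffun j => ((y (s j)).1, (y j).2)].

Definition Pop (N : nat) (s : {perm 'I_N}) : op (config E N) :=
  fun x y => (x == cact s y)%:R.

Lemma cact1 N (y : config E N) : cact 1 y = y.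
Proof. by apply/ffunP => j; rewrite ffunE perm1; case: (y j). Qed.

Lemma cactM N (s t : {perm 'I_N}) y : cact s (cact t y) = cact (s * t) y.
Proof. by apply/ffunP => j; rewrite !ffunE permM /=. Qed.

Lemma sum_delta (T : finType) (f g : T -> T) x y :
  \sum_(z : T) (x == f z)%:R * (z == g y)%:R = (x == f (g y))%:R :> algC.
Proof.
rewrite (bigD1 (g y)) //= eqxx mulr1 big1 ?addr0 // => z /negbTE ->.
by rewrite mulr0.
Qed.

Lemma RmatE eps (x y : E * E) :
  Rmat n m eps x y = (-1) ^+ eps * (x == ((y.2.1, y.1.2), (y.1.1, y.2.2)))%:R.
Proof.
congr (_ * _%:R); case: x => [[a b] [c d]]; case: y => [[a' b'] [c' d']] /=.
by rewrite !xpair_eqE !andbA.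
Qed.

Lemma local_opE eps N' (i : 'I_N') x y :
  local_op (Rmat n m eps) i x y =
  (-1) ^+ eps * Pop (tperm (site0 i) (site1 i)) x y.
Proof.
have ab : site0 i != site1 i.
  by rewrite -val_eqE /= /bump leq0n add1n neq_ltn ltnSn.
rewrite /local_op RmatE /Pop -mulrA -natrM -mulnb; congr (_ * _%:R).
set a := site0 i; set b := site1 i.
rewrite /= !mulnb; congr (nat_of_bool _).
apply/andP/eqP => [[/andP[/eqP H1 /eqP H1'] /forallP H2]|->].
  apply/ffunP => j; rewrite ffunE.
  case: (eqVneq j a) => [->|ja].
    by rewrite tpermL H1.
  case: (eqVneq j b) => [->|jb].
    by rewrite tpermR H1'.
  rewrite tpermD 1?eq_sym //; move: (H2 j); rewrite ja jb /= => /eqP ->.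
  by case: (y j).
rewrite !ffunE tpermL tpermR /= !eqxx /=; split => //.
apply/forallP => j; apply/implyP => /andP[ja jb].
by rewrite ffunE tpermD 1?eq_sym //; case: (y j).
Qed.

Lemma mulopP N (A B : op (config E N)) c d s t x y :
  (forall a b, A a b = c * Pop s a b) -> (forall a b, B a b = d * Pop t a b) ->
  mulop A B x y = (c * d) * Pop (s * t) x y.
Proof.
move=> HA HB; rewrite /mulop.
under eq_bigr => z _ do rewrite HA HB mulrACA.
by rewrite -mulr_sumr sum_delta cactM.
Qed.

Lemma ab_neq N' (i : 'I_N') : site0 i != site1 i.
Proof. by rewrite -val_eqE /= /bump leq0n add1n neq_ltn ltnSn. Qed.

Lemma rhoE eps N' (w : seq 'I_N') x y :
  rho (Rmat n m eps) w x y = (-1) ^+ (eps * size w) * Pop (word_perm w) x y.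
Proof.
elim: w x y => [|i w IH] x y.
  rewrite /rho /= /word_perm big_nil muln0 expr0 mul1r /Pop cact1 //.
rewrite /rho /= -/(rho _ w) (mulopP (c := (-1) ^+ eps) (d := (-1) ^+ (eps * size w))
  (s := tperm (site0 i) (site1 i)) (t := word_perm w)).
- by rewrite /word_perm big_cons -exprD mulnS.
- by move=> a b; rewrite local_opE.
- by move=> a b; rewrite IH.
Qed.

Lemma odd_word N' (w : seq 'I_N') : odd_perm (word_perm w) = odd (size w).
Proof.
elim: w => [|i w IH]; first by rewrite /word_perm big_nil odd_perm1.
by rewrite /word_perm big_cons odd_mul_tperm -/(word_perm w) IH ab_neq.
Qed.

End Aux.

Lemma braid_perm :
  let t0 := tperm (site0 (@ord0 1)) (site1 (@ord0 1)) in
  let t1 := tperm (site0 (@ord_max 1)) (site1 (@ord_max 1)) in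
  (t0 * t1 * t0 = t1 * t0 * t1)%g.
Proof.
move=> t0 t1; apply/permP => j; rewrite !permM /t0 /t1.
by case: j => [[|[|[|k]]] Hj] //; apply/val_inj; rewrite /= !permE.
Qed.

Lemma isR n m eps : is_Rmatrix (Rmat n m eps).
Proof.
split.
  move=> x y; rewrite /mulop.
  under eq_bigr => z _ do rewrite !RmatE mulrACA.
  pose sw := fun i : Espace n m * Espace n m => (i.2.1, i.1.2, (i.1.1, i.2.2)).
  rewrite -mulr_sumr (sum_delta sw sw) /idop -expr2 sqrr_sign mul1r.
  by case: y => [[a b] [c d]].
move=> x y.
rewrite (mulopP (c := (-1) ^+ eps * (-1) ^+ eps) (d := (-1) ^+ eps)
  (s := (tperm (site0 (@ord0 1)) (site1 (@ord0 1)) * tperm (site0 (@ord_max 1)) (site1 (@ord_max 1)))%g)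
  (t := tperm (site0 (@ord0 1)) (site1 (@ord0 1)))); last by move=> *; rewrite local_opE.
  2: by move=> a b; apply: mulopP => *; rewrite local_opE.
rewrite (mulopP (c := (-1) ^+ eps * (-1) ^+ eps) (d := (-1) ^+ eps)
  (s := (tperm (site0 (@ord_max 1)) (site1 (@ord_max 1)) * tperm (site0 (@ord0 1)) (site1 (@ord0 1)))%g)
  (t := tperm (site0 (@ord_max 1)) (site1 (@ord_max 1)))); last by move=> *; rewrite local_opE.
  2: by move=> a b; apply: mulopP => *; rewrite local_opE.
by rewrite braid_perm.
Qed.

Section Count.
Variables (n m N : nat) (s : {perm 'I_N}).
Local Notation E := (Espace n m).

Definition Orb := {C : {set 'I_N} | C \in porbits s}.

Lemma orbP j : porbit s j \in porbits s.
Proof. by apply: imset_f. Qed.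

Definition orb j : Orb := exist _ (porbit s j) (orbP j).

Definition Fc (p : {ffun Orb -> 'I_n} * {ffun 'I_N -> 'I_m}) : config E N :=
  [ffun j => (p.1 (orb j), p.2 j)].

Lemma Fc_inj : injective Fc.
Proof.
move=> [g h] [g' h'] /ffunP H; congr pair; apply/ffunP.
  move=> [C HC]; have [j _ eC] := imsetP HC.
  have -> : exist _ C HC = orb j by apply/val_inj; rewrite /= eC.
  by have := H j; rewrite !ffunE => -[].
by move=> j; move: (H j); rewrite !ffunE => -[].
Qed.

Lemma fixed_iter (x : config E N) : x = cact s x ->
  forall k j, (x ((s ^+ k)%g j)).1 = (x j).1.
Proof.
move=> Hx; elim=> [|k IH] j; first by rewrite expg0 perm1.
rewrite expgSr permM.
have := congr1 (fun x : config E N => (x ((s ^+ k)%g j)).1) Hx.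
by rewrite /= ffunE /= => <-.
Qed.

Lemma card_fixed (n0 : (0 < n)%N) :
  #|[pred x : config E N | x == cact s x]| = (n ^ #|porbits s| * m ^ N)%N.
Proof.
have -> : #|[pred x : config E N | x == cact s x]| = #|Fc @: setT|.
  apply: eq_card => x; rewrite !inE; apply/eqP/imsetP => [Hx|[[g h] _ ->]].
    exists ([ffun C : Orb => if [pick j in val C] is Some j then (x j).1 else Ordinal n0], [ffun j => (x j).2]) => //.
    apply/ffunP => j; rewrite !ffunE /=.
    case: pickP => [j' Hr|/(_ j)]; last by rewrite porbit_id.
    have [k ->] := porbitP _ _ _ Hr.
    by rewrite fixed_iter //; case: (x j).
  apply/ffunP => j; rewrite !ffunE /=; congr pair.
  by congr (g _); apply/val_inj; rewrite /= -(porbit_perm s 1) expg1.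
rewrite card_imset; last exact: Fc_inj.
rewrite cardsT card_prod !card_ffun card_sig !card_ord.
done.
Qed.
End Count.

Lemma porbits_sum N (s : {perm 'I_N}) :
  (\sum_(C in porbits s) #|C|.-1 + #|porbits s|)%N = N.
Proof.
have cardC : forall C, C \in porbits s -> (0 < #|C|)%N.
  by move=> C /imsetP[j _ ->]; rewrite lt0n card_porbit_neq0.
rewrite -sum1_card -big_split /=.
under eq_bigr => C HC do rewrite addn1 (prednK (cardC C HC)).
rewrite -[RHS](card_ord N) -sum1_card.
rewrite (partition_big (porbit s) (fun C => C \in porbits s)) /=; last by move=> j _; apply: imset_f.
apply: eq_bigr => C /imsetP[j _ ->].
rewrite sum1_card; apply: eq_card => i; rewrite -eq_porbit_mem.
done.
Qed.

Lemma sum_nseq k (a : algC) (F : algC -> algC) : \sum_(x <- nseq k a) F x = F a *+ k.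
Proof. by elim: k => [|k IH]; rewrite ?big_nil // big_cons IH mulrS. Qed.

Lemma thoma_pE (n : nat) (eps : bool) k : (0 < n)%N -> (0 < k)%N ->
  thoma_p (if eps then [::] else nseq n (n%:R^-1))
          (if eps then nseq n (n%:R^-1) else [::]) k
  = ((-1) ^+ eps * n%:R^-1) ^+ k.-1.
Proof.
move=> n0; case: k => [|[|k]] // _.
have nz : n%:R != 0 :> algC by rewrite pnatr_eq0 -lt0n.
have key : n%:R^-1 ^+ k.+2 *+ n = n%:R^-1 ^+ k.+1 :> algC.
  by rewrite exprS mulrC -mulr_natr -mulrA mulVf // mulr1.
rewrite /thoma_p /=; case: eps; rewrite !big_nil !sum_nseq /= key.
  by rewrite add0r expr1 exprMn.
by rewrite mulr0 addr0 expr0 mul1r.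
Qed.

Unset Implicit Arguments.

Theorem mainTheorem2 (n m : nat) (eps : bool) :
  (0 < n)%N -> (0 < m)%N ->
  is_Rmatrix (Rmat n m eps) /\
  (forall (N' : nat) (w : seq 'I_N'),
     YBchar (Rmat n m eps) w =
     thoma_char (if eps then [::] else nseq n (n%:R^-1))
                (if eps then nseq n (n%:R^-1) else [::])
                (word_perm w)).
Proof.
move=> n0 m0; split; first exact: isR.
move=> N' w.
have nz : n%:R != 0 :> algC by rewrite pnatr_eq0 -lt0n.
have mz : m%:R != 0 :> algC by rewrite pnatr_eq0 -lt0n.
have hs := porbits_sum (word_perm w).
set c := #|porbits (word_perm w)| in hs.
set d := (\sum_(C in porbits (word_perm w)) #|C|.-1)%N in hs.
rewrite /YBchar /trop.
under eq_bigr => x _ do rewrite rhoE.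
rewrite -mulr_sumr.
have -> : \sum_x Pop (n:=n) (m:=m) (word_perm w) x x =
    #|[pred x : config (Espace n m) N'.+1 | x == cact (word_perm w) x]|%:R :> algC.
  rewrite -sum1_card natr_sum [RHS]big_mkcond; apply: eq_bigr => x _.
  rewrite /Pop (_ : x \in _ = (x == cact (n:=n) (m:=m) (word_perm w) x)) //.
  by case: eqP.
rewrite card_fixed // -/c.
have cE : #|Espace n m| = (n * m)%N by rewrite card_prod !card_ord.
rewrite cE.
have sg : (-1) ^+ (eps * size w) = ((-1) ^+ eps) ^+ d :> algC.
  rewrite -exprM -signr_odd -[in RHS]signr_odd !oddM; congr ((-1) ^+ (_ && _)).
  by rewrite -odd_word /odd_perm -/c card_ord -hs oddD addbK.
rewrite sg /thoma_char.
under eq_bigr => C HC.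
  rewrite thoma_pE //; last by case/imsetP: HC => j _ ->; rewrite lt0n card_porbit_neq0.
over.
rewrite prodrXr -/d -hs !natrM !natrX exprMn !exprD exprMn exprVn.
have nd : n%:R ^+ d != 0 :> algC by apply: expf_neq0.
have nc : n%:R ^+ c != 0 :> algC by apply: expf_neq0.
have md : m%:R ^+ d != 0 :> algC by apply: expf_neq0.
have mc : m%:R ^+ c != 0 :> algC by apply: expf_neq0.
move: (n%:R ^+ d) (n%:R ^+ c) (m%:R ^+ d) (m%:R ^+ c) ((-1) ^+ eps ^+ d : algC) nd nc md mc.
move=> A B C D S hA hB hC hD.
field.
by rewrite hA hB hC hD.
Qed.
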